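(* Let $G$ be the cdf of a continuous real random variable. For $(\lambda_1,\lambda_2)\in\mathbb{R}^2$ define $$F_{R18b}(x)=(1+\lambda_1+\lambda_2)G(x)-(\lambda_1+2\lambda_2)G^2(x)+\lambda_2G^3(x),\qquad F_G(x)=\lambda_1 G(x)+(\lambda_2-\lambda_1)G^2(x)+(1-\lambda_2)G^3(x).$$ Let $\mathscr{S}_{R18b}=\{(\lambda_1,\lambda_2): -1\le\lambda_1\le1,\ 0\le\lambda_2\le1\}$, $\mathscr{S}_{MR18b}=\{(\lambda_1,\lambda_2): -2\le\lambda_1\le1,\ -2\le\lambda_2\le1,\ -1\le\lambda_1+\lambda_2\le2\}$ and $\mathscr{S}_{MG}=\{(\lambda_1,\lambda_2):0\le\lambda_1\le3,\ 0\le\lambda_2\le3,\ 0\le\lambda_1+\lambda_2\le3\}$. Then: (i) For every $(\lambda_1,\lambda_2)\in\mathscr{S}_{R18b}$, $F_{R18b}$ is a cdf. (ii) For every $(\lambda_1,\lambda_2)\in\mathscr{S}_{MR18b}$, $F_{R18b}$ is a cdf. (iii) For every $(\lambda_1,\lambda_2)\in\mathscr{S}_{MR18b}$, $(1+\lambda_1+\lambda_2,1-\lambda_2)\in\mathscr{S}_{MG}$ and $F_{R18b}$ with parameters $(\lambda_1,\lambda_2)$ coincides with $F_G$ with parameters $(1+\lambda_1+\lambda_2,1-\lambda_2)$. (iv) For every $(\lambda_1,\lambda_2)\in\mathscr{S}_{MG}$, $(\lambda_1+\lambda_2-2,1-\lambda_2)\in\mathscr{S}_{MR18b}$ and $F_G$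 with parameters $(\lambda_1,\lambda_2)$ coincides with $F_{R18b}$ with parameters $(\lambda_1+\lambda_2-2,1-\lambda_2)$.
   Context: A cdf is a nondecreasing, right-continuous function $F:\mathbb{R}\to[0,1]$ with limits $0$ at $-\infty$ and $1$ at $+\infty$. $G^k(x)=(G(x))^k$. *)

(* Defs.v *)
From Stdlib Require Import Reals.
From Coquelicot Require Import Coquelicot.
Open Scope R_scope.

Definition is_cdf (F : R -> R) : Prop :=
  (forall x, 0 <= F x <= 1) /\
  (forall x y, x <= y -> F x <= F y) /\
  (forall x, filterlim F (at_right x) (locally (F x))) /\
  filterlim F (Rbar_locally m_infty) (locally 0) /\
  filterlim F (Rbar_locally p_infty) (locally 1).

Definition is_continuous_cdf (G : R -> R) : Prop :=
  is_cdf G /\ (forall x, continuous G x).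

Definition F_R18b (l1 l2 : R) (G : R -> R) (x : R) : R :=
  (1 + l1 + l2) * G x - (l1 + 2 * l2) * (G x) ^ 2 + l2 * (G x) ^ 3.

Definition F_G (l1 l2 : R) (G : R -> R) (x : R) : R :=
  l1 * G x + (l2 - l1) * (G x) ^ 2 + (1 - l2) * (G x) ^ 3.

Definition S_R18b (l1 l2 : R) : Prop :=
  -1 <= l1 <= 1 /\ 0 <= l2 <= 1.

Definition S_MR18b (l1 l2 : R) : Prop :=
  -2 <= l1 <= 1 /\ -2 <= l2 <= 1 /\ -1 <= l1 + l2 <= 2.

Definition S_MG (l1 l2 : R) : Prop :=
  0 <= l1 <= 3 /\ 0 <= l2 <= 3 /\ 0 <= l1 + l2 <= 3.

(* Main.v *)
Require Import Defs.
From Stdlib Require Import Reals Lra Psatz.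
From Coquelicot Require Import Coquelicot.
Open Scope R_scope.

Lemma cdf_comp (p : R -> R) (G : R -> R) :
  is_continuous_cdf G -> (forall t, continuous p t) -> p 0 = 0 -> p 1 = 1 ->
  (forall t, 0 <= t <= 1 -> 0 <= p t <= 1) ->
  (forall s t, 0 <= s -> s <= t -> t <= 1 -> p s <= p t) ->
  is_cdf (fun x => p (G x)).
Proof.
  intros [[H01 [Hmon [Hrc [Hm Hp]]]] Hc] pc p0 p1 prange pmon.
  split; [|split; [|split; [|split]]].
  - intro x; apply prange, H01.
  - intros x y Hxy. apply pmon; try apply H01. now apply Hmon.
  - intro x. eapply filterlim_comp; [apply Hrc | apply pc].
  - rewrite <- p0. eapply filterlim_comp; [apply Hm | apply pc].
  - rewrite <- p1. eapply filterlim_comp; [apply Hp | apply pc].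
Qed.

Lemma key (l1 l2 s t : R) : S_MR18b l1 l2 -> 0 <= s -> s <= t -> t <= 1 ->
  F_R18b l1 l2 (fun x => x) s <= F_R18b l1 l2 (fun x => x) t.
Proof.
  intros [[a1 a2] [[b1 b2] [c1 c2]]] hs hst ht. unfold F_R18b. cbv beta.
  set (L1 := 1 + l1 + l2). set (L2 := 1 - l2).
  set (q00 := s*s + s*t + t*t).
  set (q30 := (1-s)*(1-s) + (1-s)*(1-t) + (1-t)*(1-t)).
  set (q03 := 3*(s+t) - 2*(s*s+s*t+t*t)).
  assert (E : (1 + l1 + l2) * t - (l1 + 2 * l2) * t ^ 2 + l2 * t ^ 3
     - ((1 + l1 + l2) * s - (l1 + 2 * l2) * s ^ 2 + l2 * s ^ 3)
     = (t - s) * ((1 - (L1+L2)/3) * q00 + (L1/3) * q30 + (L2/3) * q03)).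
  { unfold L1, L2, q00, q30, q03. field. }
  assert (h00 : 0 <= q00) by (unfold q00; nra).
  assert (h30 : 0 <= q30) by (unfold q30; nra).
  assert (h03 : 0 <= q03) by (unfold q03; nra).
  assert (0 <= (1 - (L1+L2)/3) * q00 + (L1/3) * q30 + (L2/3) * q03).
  { unfold L1, L2 in *. 
    assert (0 <= 1 - (1 + l1 + l2 + (1 - l2)) / 3) by lra.
    assert (0 <= (1 + l1 + l2)/3) by lra.
    assert (0 <= (1 - l2)/3) by lra.
    apply Rplus_le_le_0_compat; [apply Rplus_le_le_0_compat|];
      apply Rmult_le_pos; lra. }
  assert (0 <= (t - s) * ((1 - (L1+L2)/3) * q00 + (L1/3) * q30 + (L2/3) * q03))
    by (apply Rmult_le_pos; lra).
  unfold L1, L2, q00, q30, q03 in *; lra.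
Qed.

Lemma cdfR (G : R -> R) l1 l2 : is_continuous_cdf G -> S_MR18b l1 l2 ->
  is_cdf (F_R18b l1 l2 G).
Proof.
  intros HG HS.
  change (is_cdf (fun x => F_R18b l1 l2 (fun y => y) (G x))).
  apply cdf_comp; auto.
  - intro t. apply (@ex_derive_continuous R_AbsRing R_NormedModule (fun y => F_R18b l1 l2 (fun z => z) y)). unfold F_R18b. auto_derive. auto.
  - unfold F_R18b; ring.
  - unfold F_R18b; ring.
  - intros t Ht. split.
    + replace 0 with (F_R18b l1 l2 (fun y => y) 0) by (unfold F_R18b; ring).
      apply key; auto; lra.
    + replace 1 with (F_R18b l1 l2 (fun y => y) 1) by (unfold F_R18b; ring).
      apply key; auto; lra.
  - intros; apply key; auto.
Qed.

Theorem proposition4 (G : R -> R) (HG : is_continuous_cdf G) :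
  (forall l1 l2, S_R18b l1 l2 -> is_cdf (F_R18b l1 l2 G)) /\
  (forall l1 l2, S_MR18b l1 l2 -> is_cdf (F_R18b l1 l2 G)) /\
  (forall l1 l2, S_MR18b l1 l2 ->
     S_MG (1 + l1 + l2) (1 - l2) /\
     forall x, F_R18b l1 l2 G x = F_G (1 + l1 + l2) (1 - l2) G x) /\
  (forall l1 l2, S_MG l1 l2 ->
     S_MR18b (l1 + l2 - 2) (1 - l2) /\
     forall x, F_G l1 l2 G x = F_R18b (l1 + l2 - 2) (1 - l2) G x).
Proof.
  split; [|split; [|split]].
  - intros l1 l2 H. apply cdfR; auto. unfold S_R18b, S_MR18b in *; lra.
  - intros; apply cdfR; auto.
  - intros l1 l2 H. unfold S_MR18b, S_MG in *. split; [lra|].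
    intro x; unfold F_R18b, F_G; ring.
  - intros l1 l2 H. unfold S_MR18b, S_MG in *. split; [lra|].
    intro x; unfold F_R18b, F_G; ring.
Qed.
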